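(* Let $G$ be a finite abelian group, $K_1,K_2,K_3\leq G$ cyclic subgroups with $K_i\cap K_j=\{1\}$ for $i\neq j$, and for $i=1,2,3$ let $\psi_i:G\to\mathrm{Aut}(C_i)$ be an action of $G$ on a smooth projective curve $C_i$ of genus $\geq 2$ with $\ker\psi_i=K_i$ and $g(C_i/G)=1$, such that the diagonal action of $G$ on $C_1\times C_2\times C_3$ is free (i.e. $\Sigma_1\cap\Sigma_2\cap\Sigma_3=\{1\}$). For each $i$ fix a non-trivial element $\tilde\sigma_i\in G/K_i$ having a fixed point on $C_i$. Let $I(\tilde\sigma_1,\tilde\sigma_2,\tilde\sigma_3)=\{\chi_1\otimes\chi_2\otimes\chi_3\in I:\chi_i(\tilde\sigma_i)\neq1\text{ for } i=1,2,3\}$, let $G(\tilde\sigma_1,\tilde\sigma_2,\tilde\sigma_3)=\bigcap_{\psi\in I(\tilde\sigma_1,\tilde\sigma_2,\tilde\sigma_3)}\ker(\psi)\leq G\times G\times G$, and $\tilde G(\tilde\sigma_1,\tilde\sigma_2,\tilde\sigma_3)=G(\tilde\sigma_1,\tilde\sigma_2,\tilde\sigma_3)/K\Delta_G$, where $K=K_1\times K_2\times K_3$ and $\Delta_G$ is the diagonal of $G^3$. Then $\tilde G(\tilde\sigma_1,\tilde\sigma_2,\tilde\sigma_3)$ is either trivial or an elementary abelian $2$-group.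
   Context: $G^*$ denotes the group of characters (homomorphisms $G\to\mathbb{C}^*$). A character $\chi$ with $K_i\subseteq\ker\chi$ is viewed also as a character of $G/K_i$. $\Sigma_i=\{g\in G: g \text{ has a fixed point on } C_i\}$ (the union of the stabilizers of the $G$-action on $C_i$). A character $\chi\in G^*$ is pre-admissible for $i$ if $K_i\subseteq\ker\chi$ and $\chi(\sigma)\neq1$ for some $\sigma\in\Sigma_i$. For $\psi=\chi_1\otimes\chi_2\otimes\chi_3$ with $\chi_i\in G^*$, $\psi(\tau_1,\tau_2,\tau_3)=\chi_1(\tau_1)\chi_2(\tau_2)\chi_3(\tau_3)$ on $G^3$. $I_1$ is the set of $\chi_1\otimes\chi_2\otimes\chi_3$ with each $\chi_i$ pre-admissible for $i$ and $\chi_3=\overline{\chi_1\chi_2}$ (admissible of first kind); $I_2$ is the set of $\chi_1\otimes\chi_2\otimes\chi_3$ with exactly one $\chi_i$ trivial and the other two pre-admissible for their respective indices and complex conjugate to each other (admissible of second kind); $I=I_1\cup I_2$. An elementary abelian $2$-group is a group isomorphic to $(\mathbb{Z}/2\mathbb{Z})^k$. *)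

(* Defs.v *)
From HB Require Import structures.
From mathcomp Require Import all_boot all_order all_algebra all_fingroup all_solvable all_field all_character.
Set Implicit Arguments. Unset Strict Implicit. Unset Printing Implicit Defensive.
Import GRing.Theory Num.Theory.
Local Open Scope ring_scope.

(* Combinatorial (Riemann existence theorem) encoding of an action
   psi : G -> Aut(C) of a finite abelian group G on a smooth projective
   curve C with ker psi = K, g(C/G) = 1 and g(C) >= 2, together with
   the set S = Sigma of elements of G having a fixed point on C:
   G/K is generated by a, b, g_1..g_r (r >= 1) with g_j nontrivial in G/K and
   [a,b] g_1 ... g_r = 1 in G/K (i.e. g_1...g_r in K as G is abelian);
   the stabilizers are the preimages K<g_j>, so Sigma = U_j K<g_j>. *)
Definition genus1_quotient_action_data (gT : finGroupType)
    (G K : {group gT}) (S : {set gT}) : Prop :=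
  exists (r : nat) (a b : gT) (g : 'I_r -> gT),
    [/\ (0 < r)%N, a \in G, b \in G &
        (forall j, g j \in G :\: K)] /\
    [/\
        (\prod_(j < r) g j)%g \in K,
        G :=: << (K :|: [set a; b]) :|: [set g j | j : 'I_r] >>%g &
        S = \bigcup_(j < r) (K * <[g j]>)%g].

(* Characters of G (homomorphisms G -> C^* ) = linear irreducible characters. *)
Definition preadm (gT : finGroupType) (G K : {group gT}) (S : {set gT})
    (i : Iirr G) : bool :=
  [&& 'chi_i \is a linear_char, K \subset cfker 'chi_i &
      [exists s in S, 'chi_i s != 1%R]].

Definition admissible1 (gT : finGroupType) (G K1 K2 K3 : {group gT})
    (S1 S2 S3 : {set gT}) (i1 i2 i3 : Iirr G) : bool :=
  [&& preadm K1 S1 i1, preadm K2 S2 i2, preadm K3 S3 i3 &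
      'chi_i3 == (('chi_i1 * 'chi_i2)^*)%CF].

Definition admissible2 (gT : finGroupType) (G K1 K2 K3 : {group gT})
    (S1 S2 S3 : {set gT}) (i1 i2 i3 : Iirr G) : bool :=
  [|| [&& 'chi_i1 == 1%R, preadm K2 S2 i2, preadm K3 S3 i3 &
          'chi_i3 == (('chi_i2)^*)%CF],
      [&& 'chi_i2 == 1%R, preadm K1 S1 i1, preadm K3 S3 i3 &
          'chi_i3 == (('chi_i1)^*)%CF] |
      [&& 'chi_i3 == 1%R, preadm K1 S1 i1, preadm K2 S2 i2 &
          'chi_i2 == (('chi_i1)^*)%CF]].

Definition admissible (gT : finGroupType) (G K1 K2 K3 : {group gT})
    (S1 S2 S3 : {set gT}) (i1 i2 i3 : Iirr G) : bool :=
  admissible1 K1 K2 K3 S1 S2 S3 i1 i2 i3 || admissible2 K1 K2 K3 S1 S2 S3 i1 i2 i3.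

Definition Isig (gT : finGroupType) (G K1 K2 K3 : {group gT})
    (S1 S2 S3 : {set gT}) (s1 s2 s3 : gT) (i1 i2 i3 : Iirr G) : bool :=
  [&& admissible K1 K2 K3 S1 S2 S3 i1 i2 i3,
      'chi_i1 s1 != 1%R, 'chi_i2 s2 != 1%R & 'chi_i3 s3 != 1%R].

Definition psi3 (gT : finGroupType) (G : {group gT}) (i1 i2 i3 : Iirr G)
    (t : gT * gT * gT) : algC :=
  ('chi_i1 t.1.1 * 'chi_i2 t.1.2 * 'chi_i3 t.2)%R.

Definition Gsig (gT : finGroupType) (G K1 K2 K3 : {group gT})
    (S1 S2 S3 : {set gT}) (s1 s2 s3 : gT) : {set gT * gT * gT} :=
  [set t in setX (setX G G) G |
     [forall i1 : Iirr G, forall i2 : Iirr G, forall i3 : Iirr G,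
        Isig K1 K2 K3 S1 S2 S3 s1 s2 s3 i1 i2 i3 ==> (psi3 i1 i2 i3 t == 1%R)]].

Definition KDelta (gT : finGroupType) (G K1 K2 K3 : {group gT})
    : {set gT * gT * gT} :=
  (setX (setX K1 K2) K3 * [set (g, g, g) | g in G])%g.

(* Main.v *)
Require Import Defs.
From HB Require Import structures.
From mathcomp Require Import all_boot all_order all_algebra all_fingroup all_solvable all_field all_character.
From mathcomp Require Import ring.
Local Open Scope group_scope.
Import GRing.Theory Num.Theory.

Lemma mulpE (aT bT : finGroupType) (a c : aT) (b d : bT) :
  ((a, b) * (c, d) = (a * c, b * d))%g.
Proof. by []. Qed.

Lemma sepP (aT : finGroupType) (P H : {group aT}) t :
  abelian P -> H \subset P -> t \in P -> t \notin H ->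
  exists i : Iirr P, [/\ ('chi_i)%R \is a linear_char, H \subset cfker ('chi_i)%R
                        & ('chi_i t != 1)%R].
Proof.
move=> aP sHP Pt Ht.
have nHP : H <| P by rewrite -sub_abelian_normal.
rewrite -(cap_cfker_normal nHP) in Ht.
case: (boolP [exists i, (H \subset cfker ('chi[P]_i)%R) && (t \notin cfker ('chi_i)%R)]).
  case/existsP=> i /andP[Hi ti]; exists i.
  have li : ('chi_i)%R \is a linear_char by apply/char_abelianP.
  split=> //; move: ti; rewrite cfkerEirr inE lin_char1 //.
move/existsPn=> no; case/negP: Ht; apply/bigcapP=> i Hi.
by move: (no i); rewrite Hi /= negbK.
Qed.

Lemma liftP (gT rT : finGroupType) (G : {group gT}) (P : {group rT})
   (e : {morphism [set: gT] >-> rT}) (phi : 'CF(P)) :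
  phi \is a linear_char -> e @* G \subset P ->
  exists i : Iirr G, ('chi_i)%R \is a linear_char /\ {in G, forall x, ('chi_i x = phi (e x))%R}.
Proof.
move=> lphi sGP.
set c := cfMorph ('Res[e @* G] phi)%R.
have lc : c \is a linear_char by apply/cfMorph_lin_char/cfRes_lin_char.
have /irrP[i ci] := lin_char_irr lc.
exists i; rewrite -ci; split=> // x Gx.
by rewrite cfMorphE ?subsetT // cfResE // mem_morphim ?inE.
Qed.

Definition e1 (gT : finGroupType) (x : gT) : gT * gT * gT := (x, 1, 1).
Definition e2 (gT : finGroupType) (x : gT) : gT * gT * gT := (1, x, 1).
Definition e3 (gT : finGroupType) (x : gT) : gT * gT * gT := (1, 1, x).
Arguments e1 {gT} x.
Arguments e2 {gT} x.
Arguments e3 {gT} x.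
Lemma e1M gT : {morph @e1 gT : x y / x * y}.
Proof. by move=> x y; rewrite /e1 !mulpE !mulg1. Qed.
Lemma e2M gT : {morph @e2 gT : x y / x * y}.
Proof. by move=> x y; rewrite /e2 !mulpE !mulg1. Qed.
Lemma e3M gT : {morph @e3 gT : x y / x * y}.
Proof. by move=> x y; rewrite /e3 !mulpE !mulg1. Qed.
Canonical e1_morphism gT := @Morphism _ _ setT _ (in2W (@e1M gT)).
Canonical e2_morphism gT := @Morphism _ _ setT _ (in2W (@e2M gT)).
Canonical e3_morphism gT := @Morphism _ _ setT _ (in2W (@e3M gT)).

Lemma gd_group gT (G K : {group gT}) S s :
  abelian G -> K \subset G -> genus1_quotient_action_data G K S -> s \in S ->
  exists B : {group gT}, [/\ K \subset B, s \in B, B \subset S & B \subset G].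
Proof.
move=> aG sKG [r [a [b [g [[_ _ _ gG] [_ _ ->]]]]]] /bigcupP[j _ sj].
have gjG : g j \in G by have := gG j; rewrite inE => /andP[].
have cKg : commute K <[g j]>.
  by apply: normC; apply: subset_trans sKG (sub_abelian_norm aG _); rewrite cycle_subG.
exists (K <*> <[g j]>)%G; rewrite /= comm_joingE //; split=> //.
- by apply: mulg_subl; apply: group1.
- by apply: (bigcup_sup j).
- by rewrite mul_subG // cycle_subG.
Qed.
Lemma invpE (aT bT : finGroupType) (a : aT) (b : bT) : ((a, b)^-1 = (a^-1, b^-1))%g.
Proof. by []. Qed.

Lemma abelianX3 gT (G : {group gT}) : abelian G -> abelian (setX (setX G G) G).
Proof.
move=> aG; apply/centsP=> [[[x1 x2] x3]] Px [[y1 y2] y3] Py.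
rewrite !inE /= in Px Py.
case/andP: Px => /andP[P1 P2] P3; case/andP: Py => /andP[Q1 Q2] Q3.
rewrite /commute !mulpE.
by rewrite (centsP aG x1 P1 y1 Q1) (centsP aG x2 P2 y2 Q2) (centsP aG x3 P3 y3 Q3).
Qed.

Lemma group_diag gT (G : {group gT}) : group_set [set (g, g, g) | g in G].
Proof.
apply/group_setP; split; first by apply/imsetP; exists 1.
move=> _ _ /imsetP[x Gx ->] /imsetP[y Gy ->]; apply/imsetP; exists (x * y) => //.
exact: groupM.
Qed.

Lemma joinP (aT : finGroupType) (P A B : {group aT}) :
  abelian P -> A \subset P -> B \subset P -> A <*> B = A * B.
Proof.
move=> aP sAP sBP; apply: comm_joingE; apply: normC.
exact: subset_trans sAP (sub_abelian_norm aP sBP).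
Qed.

Lemma eX (gT : finGroupType) (e : gT -> gT * gT * gT) (eM : {morph e : x y / x * y}) (e1 : e 1 = 1) s n :
  e s ^+ n = e (s ^+ n).
Proof. by elim: n => [|n IH]; rewrite ?expg0 ?e1 // !expgS IH eM. Qed.

Lemma e1X (gT : finGroupType) (s : gT) n : e1 s ^+ n = e1 (s ^+ n).
Proof. by apply: eX; [apply: e1M|]. Qed.
Lemma e2X (gT : finGroupType) (s : gT) n : e2 s ^+ n = e2 (s ^+ n).
Proof. by apply: eX; [apply: e2M|]. Qed.
Lemma e3X (gT : finGroupType) (s : gT) n : e3 s ^+ n = e3 (s ^+ n).
Proof. by apply: eX; [apply: e3M|]. Qed.

Lemma tripleP gT (G K1 K2 K3 : {group gT}) (phi : 'CF(setX (setX G G) G)) :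
  abelian G -> K1 \subset G -> K2 \subset G -> K3 \subset G ->
  phi \is a linear_char -> {in KDelta G K1 K2 K3, forall k, phi k = 1%R} ->
  exists i1 i2 i3 : Iirr G,
   [/\ [/\ ('chi_i1)%R \is a linear_char, ('chi_i2)%R \is a linear_char
         & ('chi_i3)%R \is a linear_char],
       [/\ K1 \subset cfker ('chi_i1)%R, K2 \subset cfker ('chi_i2)%R
         & K3 \subset cfker ('chi_i3)%R],
       ('chi_i3)%R = ((('chi_i1 * 'chi_i2)%R)^*)%CF,
       [/\ {in G, forall x, ('chi_i1 x = phi (e1 x))%R},
           {in G, forall x, ('chi_i2 x = phi (e2 x))%R}
         & {in G, forall x, ('chi_i3 x = phi (e3 x))%R}]
     & {in setX (setX G G) G, forall t, psi3 i1 i2 i3 t = phi t}].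
Proof.
move=> aG sK1 sK2 sK3 lphi ker.
have PE1 : forall x, x \in G -> e1 x \in setX (setX G G) G.
  by move=> x Gx; rewrite !inE /= Gx !group1.
have PE2 : forall x, x \in G -> e2 x \in setX (setX G G) G.
  by move=> x Gx; rewrite !inE /= Gx !group1.
have PE3 : forall x, x \in G -> e3 x \in setX (setX G G) G.
  by move=> x Gx; rewrite !inE /= Gx !group1.
have sE1 : [morphism of @e1 gT] @* G \subset setX (setX G G) G.
  by apply/subsetP=> _ /morphimP[x _ Gx ->]; exact: PE1.
have [i1 [l1 v1]] := @liftP _ _ _ _ _ _ lphi sE1.
have sE2 : [morphism of @e2 gT] @* G \subset setX (setX G G) G.
  by apply/subsetP=> _ /morphimP[x _ Gx ->]; exact: PE2.
have [i2 [l2 v2]] := @liftP _ _ _ _ _ _ lphi sE2.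
have sE3 : [morphism of @e3 gT] @* G \subset setX (setX G G) G.
  by apply/subsetP=> _ /morphimP[x _ Gx ->]; exact: PE3.
have [i3 [l3 v3]] := @liftP _ _ _ _ _ _ lphi sE3.
have {v1}v1 : {in G, forall x, ('chi_i1 x = phi (e1 x))%R} := v1.
have {v2}v2 : {in G, forall x, ('chi_i2 x = phi (e2 x))%R} := v2.
have {v3}v3 : {in G, forall x, ('chi_i3 x = phi (e3 x))%R} := v3.
have D1 : forall g, g \in G -> (g, g, g) \in [set (g, g, g) | g in G].
  by move=> g Gg; apply/imsetP; exists g.
have inKD : forall k1 k2 k3, k1 \in K1 -> k2 \in K2 -> k3 \in K3 ->
    (k1, k2, k3) \in KDelta G K1 K2 K3.
  move=> k1 k2 k3 Hk1 Hk2 Hk3; rewrite -[(k1, k2, k3)]mulg1.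
  by apply: mem_mulg; [rewrite !inE /= Hk1 Hk2 Hk3 | apply: (D1 1); apply: group1].
exists i1, i2, i3; split=> //.
- split; apply/subsetP=> k Kk; rewrite cfkerEirr inE lin_char1 //.
  + by rewrite v1 ?(subsetP sK1) // ker // inKD.
  + by rewrite v2 ?(subsetP sK2) // ker // inKD.
  + by rewrite v3 ?(subsetP sK3) // ker // inKD.
- apply/cfunP=> x; rewrite cfConjCE cfunE.
  case Gx: (x \in G); last by rewrite !cfun0 ?Gx // mul0r conjC0.
  rewrite v1 // v2 // v3 //.
  have Exx : e3 x = (x^-1, x^-1, 1) * (x, x, x).
    by rewrite /e3 !mulpE !mulVg mul1g.
  have PV : (x^-1, x^-1, 1) \in setX (setX G G) G by rewrite !inE /= groupV Gx group1.
  have PD : (x, x, x) \in setX (setX G G) G by rewrite !inE /= Gx.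
  rewrite Exx (lin_charM lphi PV PD) (ker (x, x, x)); last first.
    rewrite -[(x, x, x)]mul1g; apply: mem_mulg; last exact: D1.
    by rewrite !inE !group1.
  rewrite mulr1 -(lin_charM lphi (PE1 x Gx) (PE2 x Gx)).
  rewrite -(lin_charV_conj lphi); last by rewrite groupM ?PE1 ?PE2.
  by rewrite /e1 /e2 !mulpE !invpE !mulg1 !mul1g invg1.
- move=> [[a b] c]; rewrite !inE /= => /andP[/andP[Ga Gb] Gc].
  rewrite /psi3 /= v1 // v2 // v3 //.
  rewrite -(lin_charM lphi (PE1 a Ga) (PE2 b Gb)).
  rewrite -(lin_charM lphi); [|by rewrite groupM ?PE1 ?PE2|exact: PE3].
  by rewrite /e1 /e2 /e3 !mulpE !mulg1 !mul1g.
Qed.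

Lemma GsigP gT (G K1 K2 K3 : {group gT}) (S1 S2 S3 : {set gT}) (s1 s2 s3 : gT)
   (phi : 'CF(setX (setX G G) G)) t :
  abelian G -> K1 \subset G -> K2 \subset G -> K3 \subset G ->
  s1 \in S1 -> s2 \in S2 -> s3 \in S3 -> s1 \in G -> s2 \in G -> s3 \in G ->
  phi \is a linear_char -> {in KDelta G K1 K2 K3, forall k, phi k = 1%R} ->
  (phi (e1 s1) != 1)%R -> (phi (e2 s2) != 1)%R -> (phi (e3 s3) != 1)%R ->
  t \in Gsig G K1 K2 K3 S1 S2 S3 s1 s2 s3 -> phi t = 1%R.
Proof.
move=> aG sK1 sK2 sK3 S1s1 S2s2 S3s3 Gs1 Gs2 Gs3 lphi ker n1 n2 n3.
have [i1 [i2 [i3 [[l1 l2 l3] [k1 k2 k3] E3 [v1 v2 v3] psiE]]]] :=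
  @tripleP _ _ _ _ _ phi aG sK1 sK2 sK3 lphi ker.
rewrite inE => /andP[Pt /forallP H].
move: (H i1) => /forallP /(_ i2) /forallP /(_ i3) /implyP H'.
rewrite -psiE //; apply/eqP; apply: H'.
apply/and4P; split; last by rewrite ?v1 ?v2 ?v3.
- apply/orP; left; apply/and4P; split; last by rewrite E3.
  + by apply/and3P; split=> //; apply/existsP; exists s1; rewrite S1s1 v1.
  + by apply/and3P; split=> //; apply/existsP; exists s2; rewrite S2s2 v2.
  + by apply/and3P; split=> //; apply/existsP; exists s3; rewrite S3s3 v3.
- by rewrite v1.
- by rewrite v2.
Qed.

Lemma lin_norm1 aT (P : {group aT}) (m : 'CF(P)) t :
  m \is a linear_char -> t \in P -> (m t * (m t)^* = 1)%R.
Proof.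
move=> lm Pt; rewrite -(lin_charV_conj lm Pt) -(lin_charM lm Pt) ?groupV //.
by rewrite mulgV lin_char1.
Qed.

Lemma final aT (P : {group aT}) (T : {set aT}) (l n1 n2 n3 : 'CF(P)) x1 x2 x3 t :
  l \is a linear_char -> n1 \is a linear_char -> n2 \is a linear_char ->
  n3 \is a linear_char -> T \subset P ->
  {in T, forall k, [/\ l k = 1, n1 k = 1, n2 k = 1 & n3 k = 1]%R} ->
  x1 \in P -> x2 \in P -> x3 \in P -> t \in P ->
  (n1 x2 = 1 /\ n1 x3 = 1)%R -> (n2 x1 = 1 /\ n2 x3 = 1)%R ->
  (n3 x1 = 1 /\ n3 x2 = 1)%R ->
  (l x1 * n1 x1 != 1)%R -> (l x1 * (n1 x1)^* != 1)%R ->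
  (l x2 * n2 x2 != 1)%R -> (l x2 * (n2 x2)^* != 1)%R ->
  (l x3 * n3 x3 != 1)%R -> (l x3 * (n3 x3)^* != 1)%R ->
  (forall phi : 'CF(P), phi \is a linear_char -> {in T, forall k, phi k = 1%R} ->
     (phi x1 != 1)%R -> (phi x2 != 1)%R -> (phi x3 != 1)%R -> phi t = 1%R) ->
  (l t ^+ 2 = 1)%R.
Proof.
move=> ll l1 l2 l3 sTP kT Px1 Px2 Px3 Pt [a12 a13] [a21 a23] [a31 a32]
  b1 c1 b2 c2 b3 c3 GS.
pose m : 'CF(P) := (n1 * n2 * n3)%R.
have lm : m \is a linear_char by rewrite !rpredM.
have lmc : (m^*)%CF \is a linear_char by rewrite cfConjC_lin_char.
have Hp := GS (l * m)%R (rpredM ll lm).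
have Hm := GS (l * (m^*)%CF)%R (rpredM ll lmc).
have {Hp}Hp : ((l * m) t = 1)%R.
  apply: Hp; rewrite /m ?cfunE ?cfConjCE ?cfunE.
  - by move=> k Tk; rewrite !cfunE; have [-> -> -> ->] := kT k Tk; rewrite !mulr1.
  - by rewrite a21 a31 !mulr1.
  - by rewrite a12 a32 mulr1 mul1r.
  - by rewrite a13 a23 !mul1r.
have {Hm}Hm : ((l * (m^*)%CF) t = 1)%R.
  apply: Hm;
    rewrite /m ?cfunE ?cfConjCE ?cfunE.
  - move=> k Tk; rewrite ?(cfunE, cfConjCE); have [-> -> -> ->] := kT k Tk.
    by rewrite !mulr1 conjC1 ?mulr1.
  - by rewrite a21 a31 !mulr1.
  - by rewrite a12 a32 mulr1 mul1r.
  - by rewrite a13 a23 !mul1r.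
rewrite cfunE in Hp; rewrite cfunE cfConjCE in Hm.
have N := @lin_norm1 _ _ _ _ lm Pt.
transitivity ((l t * m t) * (l t * (m t)^*))%R; last by rewrite Hp Hm mulr1.
by rewrite mulrACA N mulr1 expr2.
Qed.

Lemma sol1 (gT : finGroupType) (s k g : gT) : s = k * g -> g = k^-1 * s.
Proof. by move=> ->; rewrite mulKg. Qed.

Lemma sol2 (gT : finGroupType) (k g y : gT) : 1 = k * g * y -> g = k^-1 * y^-1.
Proof.
move=> E; apply: (mulgI k); rewrite mulKVg; apply: (mulIg y).
by rewrite -E mulVg.
Qed.

Lemma memH gT (G K1 K2 K3 : {group gT}) (KDg : {group gT * gT * gT})
  (y z h : gT * gT * gT) :
  abelian G -> KDg :=: KDelta G K1 K2 K3 ->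
  KDg \subset setX (setX G G) G ->
  y \in setX (setX G G) G -> z \in setX (setX G G) G ->
  h \in (KDg <*> <[y]> <*> <[z]>)%G ->
  exists k1 k2 k3 g a b, [/\ k1 \in K1, k2 \in K2, k3 \in K3, g \in G &
     h = (k1, k2, k3) * (g, g, g) * y ^+ a * z ^+ b].
Proof.
move=> aG KDE sKDP Py Pz.
have aP := @abelianX3 _ _ aG.
rewrite /= (@joinP _ _ (KDg <*> <[y]>)%G <[z]>%G aP); last by rewrite cycle_subG.
  have E2 : gval (KDg <*> <[y]>)%G = KDg * <[y]>.
    by apply: (@joinP _ _ KDg <[y]>%G aP); rewrite ?cycle_subG.
  rewrite E2.
  case/mulsgP=> u c /mulsgP[kd c' Hkd /cycleP[a ->] ->] /cycleP[b ->].
  move: Hkd; rewrite KDE; case/mulsgP=> [[[k1 k2] k3] d Hk /imsetP[g Gg ->] ->].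
  move: Hk; rewrite !inE /= => /andP[/andP[h1 h2] h3].
  by exists k1, k2, k3, g, a, b.
by rewrite join_subG sKDP cycle_subG.
Qed.

Lemma nu_good aT (P : {group aT}) (lc rho : 'CF(P)) y :
  y \in P -> (rho y != 1)%R ->
  ((lc y * (if lc y == 1 then rho else 1) y != 1) &&
   (lc y * ((if lc y == 1 then rho else 1) y)^* != 1))%R.
Proof.
move=> Py ry; have [E|ly] := eqVneq (lc y) 1%R; last first.
  by rewrite cfun1E Py mulr1 conjC1 mulr1 ly.
rewrite ?E ?eqxx !mul1r ry /=; apply: contra ry => /eqP E2.
by rewrite -(conjCK (rho y)) E2 conjC1.
Qed.

Lemma nu_one aT (P : {group aT}) (rho : 'CF(P)) (b : bool) y :
  y \in P -> (rho y = 1)%R -> ((if b then rho else 1%R) y = 1)%R.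
Proof. by case: b => // Py _; rewrite cfun1E Py. Qed.

Lemma nu_lin aT (P : {group aT}) (rho : 'CF(P)) (b : bool) :
  rho \is a linear_char -> (if b then rho else 1%R) \is a linear_char.
Proof. by case: b => //; rewrite cfun1_lin_char. Qed.

Theorem proposition4p11 (gT : finGroupType) (G K1 K2 K3 : {group gT})
    (S1 S2 S3 : {set gT}) (s1 s2 s3 : gT) :
  abelian G ->
  K1 \subset G -> K2 \subset G -> K3 \subset G ->
  cyclic K1 -> cyclic K2 -> cyclic K3 ->
  K1 :&: K2 = 1 -> K1 :&: K3 = 1 -> K2 :&: K3 = 1 ->
  genus1_quotient_action_data G K1 S1 ->
  genus1_quotient_action_data G K2 S2 ->
  genus1_quotient_action_data G K3 S3 ->
  S1 :&: S2 :&: S3 = 1 ->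
  s1 \in S1 :\: K1 -> s2 \in S2 :\: K2 -> s3 \in S3 :\: K3 ->
  2.-abelem (Gsig G K1 K2 K3 S1 S2 S3 s1 s2 s3 / KDelta G K1 K2 K3).
Proof.
move=> aG sK1 sK2 sK3 _ _ _ _ _ _ gd1 gd2 gd3 free Hs1 Hs2 Hs3.
case/setDP: Hs1 => S1s1 nK1s1; case/setDP: Hs2 => S2s2 nK2s2.
case/setDP: Hs3 => S3s3 nK3s3.
have [B1 [sKB1 s1B1 sB1S1 sB1G]] := @gd_group _ _ _ _ _ aG sK1 gd1 S1s1.
have [B2 [sKB2 s2B2 sB2S2 sB2G]] := @gd_group _ _ _ _ _ aG sK2 gd2 S2s2.
have [B3 [sKB3 s3B3 sB3S3 sB3G]] := @gd_group _ _ _ _ _ aG sK3 gd3 S3s3.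
have Gs1 := subsetP sB1G _ s1B1; have Gs2 := subsetP sB2G _ s2B2.
have Gs3 := subsetP sB3G _ s3B3.
have triv : forall g, g \in B1 -> g \in B2 -> g \in B3 -> g = 1.
  move=> g g1 g2 g3; have : g \in S1 :&: S2 :&: S3.
    by rewrite !inE (subsetP sB1S1) ?(subsetP sB2S2) ?(subsetP sB3S3).
  by rewrite free => /set1gP.
pose P := setX (setX G G) G.
have aP : abelian P := @abelianX3 _ _ aG.
pose GDg := Group (@group_diag _ G).
pose KX := (setX (setX K1 K2) K3)%G.
have sKXP : KX \subset P by rewrite !setXS.
have sGDP : GDg \subset P.
  by apply/subsetP=> _ /imsetP[g Gg ->]; rewrite !inE /= Gg.
have gKD : group_set (KX * GDg).
  apply/comm_group_setP; apply: normC.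
  exact: subset_trans sKXP (sub_abelian_norm aP sGDP).
pose KDg := Group gKD.
have sKDP : KDg \subset P by rewrite mul_subG.
have gGS : group_set (Gsig G K1 K2 K3 S1 S2 S3 s1 s2 s3).
  have lin := char_abelianP G aG.
  apply/group_setP; split.
    rewrite inE group1 /=; apply/forallP=> i1; apply/forallP=> i2.
    apply/forallP=> i3; apply/implyP=> _.
    by rewrite /psi3 /= !lin_char1 ?mulr1.
  move=> [[x1 x2] x3] [[y1 y2] y3]; rewrite !inE /=.
  case/andP=> /andP[/andP[Gx1 Gx2] Gx3] /forallP Hx.
  case/andP=> /andP[/andP[Gy1 Gy2] Gy3] /forallP Hy.
  rewrite !groupM //=; apply/forallP=> i1; apply/forallP=> i2.
  apply/forallP=> i3; apply/implyP=> I.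
  move: (Hx i1) => /forallP /(_ i2) /forallP /(_ i3) /implyP /(_ I) /eqP.
  move: (Hy i1) => /forallP /(_ i2) /forallP /(_ i3) /implyP /(_ I) /eqP.
  rewrite /psi3 /= !lin_charM // => ey ex.
  apply/eqP; rewrite -[RHS](mulr1 1%R) -{1}ex -ey; ring.
pose GSg := Group gGS.
change (2.-abelem (GSg / KDg)).
have sGSP : GSg \subset P by apply/subsetP=> t; rewrite inE => /andP[].
apply/abelemP => //; split; first by apply: quotient_abelian; apply: abelianS aP.
move=> _ /morphimP[t Nt GSt ->]; rewrite -morphX //; apply: coset_id.
apply/idPn => nt.
have Pt : t \in P := subsetP sGSP t GSt.
have [l [ll kl lt]] := @sepP _ _ _ _ aP sKDP (groupX 2 Pt) nt.
pose x1 := e1 s1; pose x2 := e2 s2; pose x3 := e3 s3.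
have Px1 : x1 \in P by rewrite !inE /= Gs1 !group1.
have Px2 : x2 \in P by rewrite !inE /= Gs2 !group1.
have Px3 : x3 \in P by rewrite !inE /= Gs3 !group1.
have [rho1 [lr1 kr1 vr1]] : exists rho : 'CF(P), [/\ rho \is a linear_char,
     [/\ {in KDg, forall k, rho k = 1%R}, rho x2 = 1%R & rho x3 = 1%R]
   & (rho x1 != 1)%R].
  pose H := (KDg <*> <[x2]> <*> <[x3]>)%G.
  have sHP : H \subset P by rewrite !join_subG sKDP !cycle_subG Px2 Px3.
  have nH : x1 \notin H.
    apply/negP=> /(@memH _ _ _ _ _ KDg _ _ _ aG (erefl _) sKDP Px2 Px3).
    case=> [k1 [k2 [k3 [g [a [b [Hk1 Hk2 Hk3 Gg]]]]]]].
    rewrite /x2 /x3 e2X e3X /x1 /e1 /e2 /e3 !mulpE ?mulg1 ?mul1g.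
    case=> E1 E2 E3.
    have g1 : g \in B1.
      by rewrite (@sol1 _ _ _ _ E1) groupM ?groupV ?(subsetP sKB1 _ Hk1).
    have g2 : g \in B2.
      by rewrite (@sol2 _ _ _ _ E2) groupM ?groupV ?groupX ?(subsetP sKB2 _ Hk2).
    have g3 : g \in B3.
      by rewrite (@sol2 _ _ _ _ E3) groupM ?groupV ?groupX ?(subsetP sKB3 _ Hk3).
    move: E1; rewrite (triv g g1 g2 g3) mulg1 => E.
    by move: nK1s1; rewrite E Hk1.
  have [rho [lr kr vr]] := @sepP _ _ _ _ aP sHP Px1 nH.
  exists ('chi_rho)%R; split=> //.
  have kv : forall h, h \in H -> ('chi_rho h = 1)%R.
    by move=> h Hh; rewrite (cfker1 (subsetP kr h Hh)) lin_char1.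
  split.
  - by move=> h Hh; apply: kv; rewrite /H /= (subsetP (joing_subl _ _)) // (subsetP (joing_subl _ _)).
  - by apply: kv; rewrite /H /= (subsetP (joing_subl _ _)) // (subsetP (joing_subr _ _)) // cycle_id.
  - by apply: kv; rewrite /H /= (subsetP (joing_subr _ _)) // cycle_id.
have [rho2 [lr2 kr2 vr2]] : exists rho : 'CF(P), [/\ rho \is a linear_char,
     [/\ {in KDg, forall k, rho k = 1%R}, rho x1 = 1%R & rho x3 = 1%R]
   & (rho x2 != 1)%R].
  pose H := (KDg <*> <[x1]> <*> <[x3]>)%G.
  have sHP : H \subset P by rewrite !join_subG sKDP !cycle_subG Px1 Px3.
  have nH : x2 \notin H.
    apply/negP=> /(@memH _ _ _ _ _ KDg _ _ _ aG (erefl _) sKDP Px1 Px3).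
    case=> [k1 [k2 [k3 [g [a [b [Hk1 Hk2 Hk3 Gg]]]]]]].
    rewrite /x1 /x3 e1X e3X /x2 /e1 /e2 /e3 !mulpE ?mulg1 ?mul1g.
    case=> E1 E2 E3.
    have g1 : g \in B1.
      by rewrite (@sol2 _ _ _ _ E1) groupM ?groupV ?groupX ?(subsetP sKB1 _ Hk1).
    have g2 : g \in B2.
      by rewrite (@sol1 _ _ _ _ E2) groupM ?groupV ?(subsetP sKB2 _ Hk2).
    have g3 : g \in B3.
      by rewrite (@sol2 _ _ _ _ E3) groupM ?groupV ?groupX ?(subsetP sKB3 _ Hk3).
    move: E2; rewrite (triv g g1 g2 g3) mulg1 => E.
    by move: nK2s2; rewrite E Hk2.
  have [rho [lr kr vr]] := @sepP _ _ _ _ aP sHP Px2 nH.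
  exists ('chi_rho)%R; split=> //.
  have kv : forall h, h \in H -> ('chi_rho h = 1)%R.
    by move=> h Hh; rewrite (cfker1 (subsetP kr h Hh)) lin_char1.
  split.
  - by move=> h Hh; apply: kv; rewrite /H /= (subsetP (joing_subl _ _)) // (subsetP (joing_subl _ _)).
  - by apply: kv; rewrite /H /= (subsetP (joing_subl _ _)) // (subsetP (joing_subr _ _)) // cycle_id.
  - by apply: kv; rewrite /H /= (subsetP (joing_subr _ _)) // cycle_id.
have [rho3 [lr3 kr3 vr3]] : exists rho : 'CF(P), [/\ rho \is a linear_char,
     [/\ {in KDg, forall k, rho k = 1%R}, rho x1 = 1%R & rho x2 = 1%R]
   & (rho x3 != 1)%R].
  pose H := (KDg <*> <[x1]> <*> <[x2]>)%G.
  have sHP : H \subset P by rewrite !join_subG sKDP !cycle_subG Px1 Px2.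
  have nH : x3 \notin H.
    apply/negP=> /(@memH _ _ _ _ _ KDg _ _ _ aG (erefl _) sKDP Px1 Px2).
    case=> [k1 [k2 [k3 [g [a [b [Hk1 Hk2 Hk3 Gg]]]]]]].
    rewrite /x1 /x2 e1X e2X /x3 /e1 /e2 /e3 !mulpE ?mulg1 ?mul1g.
    case=> E1 E2 E3.
    have g1 : g \in B1.
      by rewrite (@sol2 _ _ _ _ E1) groupM ?groupV ?groupX ?(subsetP sKB1 _ Hk1).
    have g2 : g \in B2.
      by rewrite (@sol2 _ _ _ _ E2) groupM ?groupV ?groupX ?(subsetP sKB2 _ Hk2).
    have g3 : g \in B3.
      by rewrite (@sol1 _ _ _ _ E3) groupM ?groupV ?(subsetP sKB3 _ Hk3).
    move: E3; rewrite (triv g g1 g2 g3) mulg1 => E.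
    by move: nK3s3; rewrite E Hk3.
  have [rho [lr kr vr]] := @sepP _ _ _ _ aP sHP Px3 nH.
  exists ('chi_rho)%R; split=> //.
  have kv : forall h, h \in H -> ('chi_rho h = 1)%R.
    by move=> h Hh; rewrite (cfker1 (subsetP kr h Hh)) lin_char1.
  split.
  - by move=> h Hh; apply: kv; rewrite /H /= (subsetP (joing_subl _ _)) // (subsetP (joing_subl _ _)).
  - by apply: kv; rewrite /H /= (subsetP (joing_subl _ _)) // (subsetP (joing_subr _ _)) // cycle_id.
  - by apply: kv; rewrite /H /= (subsetP (joing_subr _ _)) // cycle_id.
have GSprop : forall phi : 'CF(P), phi \is a linear_char ->
    {in KDg, forall k, phi k = 1%R} ->
    (phi x1 != 1)%R -> (phi x2 != 1)%R -> (phi x3 != 1)%R -> phi t = 1%R.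
  move=> phi lphi kphi n1 n2 n3.
  exact: (@GsigP _ G K1 K2 K3 S1 S2 S3 s1 s2 s3 phi t aG sK1 sK2 sK3
            S1s1 S2s2 S3s3 Gs1 Gs2 Gs3 lphi kphi n1 n2 n3 GSt).
set lc := ('chi_l)%R.
case: kr1 => kr1 r12 r13; case: kr2 => kr2 r21 r23; case: kr3 => kr3 r31 r32.
have /andP[b1 c1] := @nu_good _ _ lc rho1 x1 Px1 vr1.
have /andP[b2 c2] := @nu_good _ _ lc rho2 x2 Px2 vr2.
have /andP[b3 c3] := @nu_good _ _ lc rho3 x3 Px3 vr3.
have kT : {in KDg, forall k, [/\ lc k = 1, (if lc x1 == 1 then rho1 else 1) k = 1,
     (if lc x2 == 1 then rho2 else 1) k = 1 & (if lc x3 == 1 then rho3 else 1) k = 1]%R}.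
  move=> k Kk; have Pk := subsetP sKDP k Kk.
  split; try apply: nu_one => //; rewrite ?kr1 ?kr2 ?kr3 //.
  by rewrite /lc (cfker1 (subsetP kl k Kk)) lin_char1.
have := @final _ P KDg lc _ _ _ x1 x2 x3 t ll (@nu_lin _ _ _ _ lr1) (@nu_lin _ _ _ _ lr2)
  (@nu_lin _ _ _ _ lr3) sKDP kT Px1 Px2 Px3 Pt
  (conj (@nu_one _ _ _ _ _ Px2 r12) (@nu_one _ _ _ _ _ Px3 r13))
  (conj (@nu_one _ _ _ _ _ Px1 r21) (@nu_one _ _ _ _ _ Px3 r23))
  (conj (@nu_one _ _ _ _ _ Px1 r31) (@nu_one _ _ _ _ _ Px2 r32)) b1 c1 b2 c2 b3 c3 GSprop.
by move/eqP: lt; rewrite /lc (lin_charX ll).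
Qed.
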